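(* Let $q$ be a prime number, $l\ge 2$ an integer, and $\alpha=\alpha_1/\alpha_2\in\mathbb{Q}\text{-}\mathcal{KS}(q^{l})$. Then $\alpha\in\,]0,1[$ if and only if there exists a positive integer $d$ with $d\mid(q^{l}-q)$ such that $$\alpha=q-\frac{d}{\alpha_2}\quad\text{and}\quad \alpha_2\in\Bigl\{\Bigl\lfloor\frac{d}{q}\Bigr\rfloor+1,\dots,\Bigl\lceil\frac{d}{q-1}\Bigr\rceil-1\Bigr\}.$$
   Context: Every nonzero rational $\alpha$ is written $\alpha=\alpha_1/\alpha_2$ with $\alpha_1\in\mathbb{Z}$, $\alpha_2$ a positive integer and $\gcd(\alpha_1,\alpha_2)=1$. For an integer $N\ge 2$ and a nonzero rational $\alpha=\alpha_1/\alpha_2$, $N$ is called an $\alpha$-Korselt number if $N\neq\alpha$ and $\alpha_2p-\alpha_1$ divides $\alpha_2N-\alpha_1$ (in $\mathbb{Z}$) for every prime divisor $p$ of $N$. $\mathbb{Q}\text{-}\mathcal{KS}(N)$ is the set of all $\beta\in\mathbb{Q}\setminus\{0,N\}$ such that $N$ is a $\beta$-Korselt number. $\lfloor\cdot\rfloor$ and $\lceil\cdot\rceil$ are the floor and ceiling functions; $\{a,\dots,b\}$ is the set of integers from $a$ to $b$ (empty if $a>b$). *)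

(* Defs.v *)
From HB Require Import structures.
From mathcomp Require Import all_boot all_order all_algebra.
Set Implicit Arguments. Unset Strict Implicit. Unset Printing Implicit Defensive.
Import Order.TTheory GRing.Theory Num.Theory.
Local Open Scope ring_scope.

(* alpha = alpha1/alpha2 in lowest terms with alpha2 > 0:
   alpha1 = numq alpha, alpha2 = denq alpha. *)

Definition korselt (N : nat) (alpha : rat) : Prop :=
  (N%:R != alpha) /\
  forall p : nat, prime p -> (p %| N)%N ->
    (denq alpha * p%:Z - numq alpha %| denq alpha * N%:Z - numq alpha)%Z.

Definition QKS (N : nat) (beta : rat) : Prop :=
  beta != 0 /\ beta != N%:R /\ korselt N beta.

(* Main.v *)
Require Import Defs.
From HB Require Import structures.
From mathcomp Require Import all_boot all_order all_algebra.
From mathcomp Require Import zify ring lra.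
Import Order.TTheory GRing.Theory Num.Theory.
Local Open Scope ring_scope.

Lemma floor_aux (d q : nat) (n : int) : (0 < q)%N ->
  (Num.floor (d%:R / q%:R : rat) + 1 <= n) = (d%:Z < n * q%:Z).
Proof.
move=> q0; rewrite lezD1 floor_lt_int ltr_pdivrMr ?ltr0n //.
by rewrite -[d%:R]/((d%:Z)%:~R) -[q%:R]/((q%:Z)%:~R) -intrM ltr_int.
Qed.

Lemma ceil_aux (d q : nat) (n : int) : (1 < q)%N ->
  (n <= Num.ceil (d%:R / (q%:R - 1) : rat) - 1) = (n * (q%:Z - 1) < d%:Z).
Proof.
move=> q1; rewrite -ltzD1 subrK ceil_gt_int.
have h : (0 : rat) < q%:R - 1 by rewrite subr_gt0 ltr1n.
rewrite ltr_pdivlMr //.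
have -> : (q%:R - 1 : rat) = (q%:Z - 1)%:~R by rewrite intrB.
by rewrite -[d%:R]/((d%:Z)%:~R) -intrM ltr_int.
Qed.

Lemma alpha_lt (alpha : rat) : (0 < alpha < 1) = (0 < numq alpha < denq alpha).
Proof.
rewrite numq_gt0; congr (_ && _).
have a2 : (0 : rat) < (denq alpha)%:~R by rewrite ltr0z denq_gt0.
rewrite -(ltr_pM2r a2) mul1r -(ltr_int rat).
by rewrite -{1}(divq_num_den alpha) mulfVK // gt_eqF.
Qed.

Theorem proposition5p5 (q l : nat) (alpha : rat) :
  prime q -> (2 <= l)%N -> QKS (q ^ l) alpha ->
  ((0 < alpha < 1) <->
   exists d : nat, (0 < d)%N /\ (d %| q ^ l - q)%N /\
     alpha = q%:R - d%:R / (denq alpha)%:~R /\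
     Num.floor (d%:R / q%:R : rat) + 1 <= denq alpha <=
       Num.ceil (d%:R / (q%:R - 1) : rat) - 1).
Proof.
move=> pq l2 [_ [_ [_ hK]]].
have q1 : (1 < q)%N by exact: prime_gt1.
have q0 : (0 < q)%N by exact: prime_gt0.
have hq := hK q pq (dvdn_exp (leq_trans (isT : (0 < 2)%N) l2) (dvdnn q)).
set a1 := numq alpha in hq *; set a2 := denq alpha in hq *.
have a2p : 0 < a2 := denq_gt0 alpha.
have a2nz : (a2%:~R : rat) != 0 by rewrite intr_eq0 gt_eqF.
have eA : alpha = a1%:~R / a2%:~R by rewrite divq_num_den.
rewrite alpha_lt -/a1 -/a2; split.
- case/andP=> a1p a1a2.
  set D := a2 * q%:Z - a1.
  have Dp : 0 < D.
    rewrite /D; have : (1 <= q)%N := q0; nia.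
  exists `|D|%N.
  have hD : (`|D|%N : int) = D by rewrite gez0_abs // ltW.
  have hDr : ((`|D|%N)%:R : rat) = a2%:~R * q%:R - a1%:~R.
    by rewrite -[LHS]/(((`|D|%N : int))%:~R) hD /D intrB intrM.
  split; first by rewrite -ltz_nat hD.
  split.
    have -> : (`|D| %| q ^ l - q)%N = (D %| (q ^ l)%N%:Z - q%:Z)%Z.
      rewrite subzn ?dvdzE ?hD //.
      by rewrite -{1}(expn1 q) leq_pexp2l // (leq_trans _ l2).
    have cop : coprimez D a2.
      rewrite coprimez_sym /coprimez.
      have -> : D = q%:Z * a2 + (- a1) by rewrite /D; ring.
      rewrite gcdzMDl gcdzN gcdzC.
      by have := coprime_num_den alpha; rewrite -coprimezE.
    rewrite -(Gauss_dvdzr _ cop).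
    have -> : a2 * ((q ^ l)%N%:Z - q%:Z) = (a2 * (q ^ l)%N%:Z - a1) - D.
      by rewrite /D; ring.
    by apply: rpredB => //; exact: dvdzz.
  split.
    by rewrite hDr eA; field.
  rewrite floor_aux // ceil_aux // hD /D; apply/andP; split; lia.
- case=> d [d0 [_ [e /andP [h1 h2]]]].
  rewrite floor_aux // in h1; rewrite ceil_aux // in h2.
  have ea : a1 = a2 * q%:Z - d%:Z.
    apply: (@intr_inj rat).
    rewrite intrB intrM.
    have -> : (a1%:~R : rat) = alpha * a2%:~R by rewrite eA mulfVK.
    by rewrite e; field.
  apply/andP; split; lia.
Qed.
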